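(* Let the setting in the context hold, let $\beta_i\in(0,1)$ for each $i\in\mathcal{N}$, and suppose each agent uses the Wasserstein radius $\epsilon_i=\epsilon_i(K_i,\beta_i)$. Let $x_K^*$ be a DRNE of the game $\forall i:\ \min_{x_i\in X_i}\max_{\mathbb{Q}_i\in\mathbb{B}_{\epsilon_i(K_i,\beta_i)}(\hat{\mathbb{P}}_{K_i})}\mathbb{E}_{\mathbb{Q}_i}[h_i(x_i,x_{-i},\xi_i)]$ computed from the drawn multisample $\xi_K=\{\xi_{K_i}\}_{i=1}^N$. Then $$\mathbb{P}^K\Big\{\mathbb{E}_{\mathbb{P}_i}[h_i(x_K^*,\xi_i)]\le\sup_{\mathbb{Q}_i\in\mathbb{B}_{\epsilon_i(K_i,\beta_i)}(\hat{\mathbb{P}}_{K_i})}\mathbb{E}_{\mathbb{Q}_i}[h_i(x_K^*,\xi_i)]\ \ \forall i\in\mathcal{N}\Big\}\ \ge\ 1-\sum_{i\in\mathcal{N}}\beta_i,$$ where $\mathbb{P}^K=\prod_{i=1}^N\mathbb{P}_i^{K_i}$.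
   Context: Agents $i\in\mathcal{N}=\{1,\dots,N\}$ choose $x_i\in X_i\subseteq\mathbb{R}^n$, $X=\prod_iX_i$, $x=\mathrm{col}((x_i)_i)$, $x_{-i}$ the others' decisions; $h_i:\mathbb{R}^{nN}\times\Xi_i\to\mathbb{R}$ is agent $i$'s cost, with uncertainty $\xi_i\in\Xi_i\subseteq\mathbb{R}^p$, $p\neq 2$, distributed according to an unknown true distribution $\mathbb{P}_i$. $\|\cdot\|$ is the Euclidean norm; $\mathcal{M}(\Xi_i)$ is the set of distributions on $\Xi_i$ with finite first moment; $d_W(\mathbb{Q}_1,\mathbb{Q}_2)=\inf_\Pi\int\|\xi_1-\xi_2\|\Pi(d\xi_1,d\xi_2)$ over couplings $\Pi$ of $\mathbb{Q}_1,\mathbb{Q}_2$. Each agent $i$ draws $K_i\ge1$ i.i.d. samples $\xi_{K_i}=\{\xi_i^{(k)}\}_{k=1}^{K_i}$ from $\mathbb{P}_i$ (independently across agents), with empirical distribution $\hat{\mathbb{P}}_{K_i}=\frac1{K_i}\sum_k\delta_{\xi_i^{(k)}}$ and $\mathbb{B}_{\epsilon}(\hat{\mathbb{P}}_{K_i})=\{\mathbb{Q}\in\mathcal{M}(\Xi_i):d_W(\hat{\mathbb{P}}_{K_i},\mathbb{Q})\le\epsilon\}$. A DRNE is $x^*_K\in X$ with $x^*_{i,K}\in\arg\min_{x_i\in X_i}\max_{\mathbb{Q}_i\in\mathbb{B}_{\epsilon_i}(\hat{\mathbb{P}}_{K_i})}\mathbb{E}_{\mathbb{Q}_i}[h_i(x_i,x^*_{-i,K},\xi_i)]$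 for all $i$. Light-tail assumption: for each $i$, the true distribution $\mathbb{P}_i$ (and every distribution considered in agent $i$'s ambiguity set) belongs to $\mathcal{M}(\Xi_i)$ and there is $a_i>1$ with $A_i:=\mathbb{E}[\exp(\|\xi_i\|^{a_i})]<\infty$. Under this assumption there are constants $c_i,b_i>0$ depending only on $a_i,A_i,p$ (Fournier–Guillin) such that $\mathbb{P}_i^{K_i}\{\mathbb{P}_i\in\mathbb{B}_{\epsilon}(\hat{\mathbb{P}}_{K_i})\}\ge 1-c_i\exp(-b_iK_i\epsilon^{\max\{p,2\}})$ if $\epsilon\le1$ and $\ge 1-c_i\exp(-b_iK_i\epsilon^{a_i})$ if $\epsilon>1$. The radius $\epsilon_i(K_i,\beta_i)$ is defined as $\big(\ln(c_i/\beta_i)/(b_iK_i)\big)^{1/\max\{p,2\}}$ if $K_i\ge\ln(c_i/\beta_i)/b_i$ and $\big(\ln(c_i/\beta_i)/(b_iK_i)\big)^{1/a_i}$ otherwise; it satisfies $\mathbb{P}_i^{K_i}\{d_W(\mathbb{P}_i,\hat{\mathbb{P}}_{K_i})\le\epsilon_i(K_i,\beta_i)\}\ge1-\beta_i$. *)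

(* Defs.v *)
From HB Require Import structures.
From mathcomp Require Import all_boot all_order all_algebra.
From mathcomp Require Import all_classical all_reals all_analysis.
Set Implicit Arguments. Unset Strict Implicit. Unset Printing Implicit Defensive.
Import Order.TTheory GRing.Theory Num.Theory.
Local Open Scope classical_set_scope.
Local Open Scope ring_scope.

Section Defs.
Context {R : realType}.

(* Euclidean distance on R^p, represented as p.-tuple R (product Borel sigma-algebra) *)
Definition edist (p : nat) (u v : p.-tuple R) : R :=
  Num.sqrt (\sum_(j < p) (tnth u j - tnth v j) ^+ 2).
Definition enorm (p : nat) (u : p.-tuple R) : R :=
  Num.sqrt (\sum_(j < p) (tnth u j) ^+ 2).

Local Notation V p := (p.-tuple R).

Definition coupling (p : nat) (mu1 mu2 : set (V p) -> \bar R)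
  (Pi : probability (V p * V p)%type R) : Prop :=
  (forall A : set (V p), measurable A -> Pi (A `*` setT) = mu1 A) /\
  (forall A : set (V p), measurable A -> Pi (setT `*` A) = mu2 A).

Definition dW (p : nat) (mu1 mu2 : set (V p) -> \bar R) : \bar R :=
  ereal_inf [set (\int[Pi]_z (edist z.1 z.2)%:E)%E | Pi in coupling mu1 mu2].

Definition empirical (p K : nat) (s : 'I_K -> V p) : set (V p) -> \bar R :=
  fun A => (((K%:R)^-1)%:E * \sum_(k < K) \d_(s k) A)%E.

Definition inM (p : nat) (Xi : set (V p)) (Q : probability (V p) R) : Prop :=
  (exists2 A : set (V p), measurable A & A `<=` Xi /\ Q A = 1%E) /\
  (\int[Q]_z (enorm z)%:E < +oo)%E.

Definition Wball (p : nat) (Xi : set (V p)) (eps : R) (mu : set (V p) -> \bar R)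
  : set (probability (V p) R) :=
  [set Q | inM Xi Q /\ (dW mu Q <= eps%:E)%E].

Definition upd (N n : nat) (x : 'I_N -> 'rV[R]_n) (i : 'I_N) (y : 'rV[R]_n) :=
  fun j => if j == i then y else x j.

Definition worst_exp (N n p : nat) (Xi : set (V p)) (eps : R)
  (mu : set (V p) -> \bar R) (hi : ('I_N -> 'rV[R]_n) -> V p -> R)
  (x : 'I_N -> 'rV[R]_n) : \bar R :=
  ereal_sup [set (\int[Q]_z (hi x z)%:E)%E | Q in Wball Xi eps mu].

Definition is_DRNE (N n p : nat) (X : 'I_N -> set 'rV[R]_n)
  (Xi : 'I_N -> set (V p)) (eps : 'I_N -> R) (mu : 'I_N -> set (V p) -> \bar R)
  (h : 'I_N -> ('I_N -> 'rV[R]_n) -> V p -> R) (x : 'I_N -> 'rV[R]_n) : Prop :=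
  forall i, X i (x i) /\
    forall y, X i y ->
      (worst_exp (Xi i) (eps i) (mu i) (h i) x
        <= worst_exp (Xi i) (eps i) (mu i) (h i) (upd x i y))%E.

Definition eps_radius (p : nat) (a b c : R) (K : nat) (beta : R) : R :=
  let L := ln (c / beta) / (b * K%:R) in
  if ln (c / beta) / b <= K%:R then powR L (maxn p 2)%:R^-1 else powR L a^-1.

Definition mutually_independent {dO} {O : measurableType dO} (P : probability O R)
  (N p : nat) (K : 'I_N -> nat) (xi : forall i : 'I_N, 'I_(K i) -> O -> V p) : Prop :=
  forall B : forall i : 'I_N, 'I_(K i) -> set (V p),
    (forall i k, measurable (B i k)) ->
    P (\big[setI/setT]_(i < N) \big[setI/setT]_(k < K i) (xi i k @^-1` B i k))
    = (\prod_(i < N) \prod_(k < K i) P (xi i k @^-1` B i k))%E.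

End Defs.

(* Main.v *)
Require Import Defs.
From HB Require Import structures.
From mathcomp Require Import all_boot all_order all_algebra.
From mathcomp Require Import all_classical all_reals all_analysis.
From mathcomp Require Import lra.
Import Order.TTheory GRing.Theory Num.Theory.
Local Open Scope classical_set_scope.
Local Open Scope ring_scope.
Lemma radius_bound (R : realType) (p : nat) (a b c beta : R) (K : nat) :
  1 < a -> 0 < b -> 0 < c -> 0 < beta -> (0 < K)%N ->
  let e := eps_radius p a b c K beta in
  (0 < e -> c * expR (- (b * K%:R *
      (if e <= 1 then powR e (maxn p 2)%:R else powR e a))) <= beta) /\
  (e <= 0 -> c <= beta).
Proof.
move=> a1 b0 c0 be0 K0 e.
have K0' : (0 : R) < K%:R by rewrite ltr0n.
have bK0 : 0 < b * K%:R by rewrite mulr_gt0.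
have M0 : (0 : R) < (maxn p 2)%:R by rewrite ltr0n leq_max orbT.
have a0 : 0 < a by rewrite (lt_trans ltr01).
have [cb|bc] := leP c beta.
  split => // _; apply: le_trans cb.
  apply: ler_piMr; first exact: ltW.
  rewrite -[leRHS]expR0 ler_expR oppr_le0 mulr_ge0 ?(ltW bK0)//.
  by case: ifP => _; apply: powR_ge0.
have cb1 : 1 < c / beta by rewrite ltr_pdivlMr // mul1r.
have l0 : 0 < ln (c / beta) := ln_gt0 cb1.
set L := ln (c / beta) / (b * K%:R).
have L0 : 0 < L by rewrite divr_gt0.
have fE : (if e <= 1 then powR e (maxn p 2)%:R else powR e a) = L.
  rewrite /e /eps_radius -/L.
  case: (boolP (ln (c / beta) / b <= K%:R)) => hK; rewrite ?hK ?(negbTE hK).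
    have L1 : L <= 1.
      by rewrite /L ler_pdivrMr // mul1r; move: hK; rewrite ler_pdivrMr // [K%:R * _]mulrC.
    have -> : (powR L (maxn p 2)%:R^-1 <= 1) = true.
      apply/idP.
      apply: (@le_trans _ _ (powR 1 ((maxn p 2)%:R^-1))); last by rewrite powR1.
      by rewrite ge0_ler_powR // ?invr_ge0 ?ltW // nnegrE ltW.
    by rewrite -powRrM mulVf ?gt_eqF // powRr1 // ltW.
  have L1 : 1 < L.
    by rewrite /L ltr_pdivlMr // mul1r; move: hK; rewrite -ltNge ltr_pdivlMr // [K%:R * _]mulrC.
  have -> : (powR L a^-1 <= 1) = false.
    apply/negbTE; rewrite -ltNge.
    apply: (@le_lt_trans _ _ (powR 1 a^-1)); first by rewrite powR1.
    by rewrite gt0_ltr_powR // ?invr_gt0 // nnegrE ltW.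
  by rewrite -powRrM mulVf ?gt_eqF // powRr1 // ltW.
have e0 : 0 < e.
  rewrite /e /eps_radius -/L; case: ifP => _; exact: powR_gt0.
split => [_|]; last by rewrite leNgt e0.
rewrite fE /L mulrC [b * K%:R * _]mulrC divfK ?gt_eqF // expRN lnK; last by rewrite posrE (lt_trans ltr01).
by rewrite invf_div divfK ?gt_eqF.
Qed.
Lemma inter_bound (R : realType) (dO : measure_display) (O : measurableType dO)
  (P : probability O R) (I : eqType) (r : seq I) (G : I -> set O) (beta : I -> R) :
  (forall i, measurable (G i)) -> (forall i, ((1 - beta i)%:E <= P (G i))%E) ->
  ((1 - \sum_(i <- r) beta i)%:E <= P (\big[setI/setT]_(i <- r) G i))%E.
Proof.
move=> mG hG; elim: r => [|i r IH].
  by rewrite !big_nil probability_setT subr0.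
rewrite !big_cons.
set B := \big[setI/setT]_(j <- r) G j.
have mB : measurable B by apply: bigsetI_measurable.
have mAB : measurable (G i `&` B) by apply: measurableI.
have fin X : measurable X -> P X = (fine (P X))%:E.
  by move=> mX; rewrite fineK // fin_num_measure.
have le1 : (P B <= P (G i `&` B) + P (~` G i))%E.
  apply: (le_trans _ (measureU2 P mAB (measurableC (mG i)))).
  apply: le_measure; rewrite ?inE //; first exact: measurableU (measurableC (mG i)).
  by move=> w Bw; have [Aw|nAw] := pselect (G i w); [left|right].
move: le1 (hG i) IH; rewrite probability_setC //.
rewrite (fin _ mB) (fin _ mAB) (fin _ (mG i)) -EFinB -EFinD !lee_fin => h1 h2 h3.
lra.
Qed.

Lemma cap_bound (R : realType) (dO : measure_display) (O : measurableType dO)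
  (P : probability O R) (S : nat -> set O) (x : R) :
  (forall m, measurable (S m)) -> nonincreasing_seq S ->
  (forall m, (x%:E <= P (S m))%E) -> (x%:E <= P (\bigcap_m S m))%E.
Proof.
move=> mS nS hS.
have cv := nonincreasing_cvg_mu (mu:=P) (le_lt_trans (probability_le1 P (mS 0%N)) (ltry _))
   mS (bigcapT_measurable mS) nS.
rewrite -(cvg_lim _ cv) //; apply: lime_ge; first exact: cvgP cv.
by apply: nearW => m; exact: hS.
Qed.

Lemma mem_bigsetI (O : Type) (I : eqType) (r : seq I) (G : I -> set O) w :
  (\big[setI/setT]_(i <- r) G i) w -> forall i, i \in r -> G i w.
Proof.
elim: r => [|j r IH] //; rewrite big_cons => -[Gj Gr] i.
by rewrite in_cons => /orP[/eqP->//|ir]; exact: IH.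
Qed.

Lemma exp_le (R : realType) (b c f : R) : 0 <= b -> 0 < c -> 0 <= f ->
  c * expR (- (b * f)) <= c.
Proof.
move=> b0 c0 f0; apply: ler_piMr; first exact: ltW.
by rewrite -[leRHS]expR0 ler_expR oppr_le0 mulr_ge0.
Qed.
Theorem lemma4 (R : realType) (N n p : nat) (hp : p != 2%N)
  (X : 'I_N -> set 'rV[R]_n)
  (Xi : 'I_N -> set (p.-tuple R))
  (h : 'I_N -> ('I_N -> 'rV[R]_n) -> p.-tuple R -> R)
  (Ptrue : 'I_N -> probability (p.-tuple R) R)
  (a b c beta : 'I_N -> R)
  (K : 'I_N -> nat)
  (* light-tail assumption *)
  (hPM : forall i, inM (Xi i) (Ptrue i))
  (ha : forall i, 1 < a i)
  (hA : forall i,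
     (\int[Ptrue i]_z (expR (powR (enorm z) (a i)))%:E < +oo)%E)
  (hK : forall i, (0 < K i)%N)
  (hbeta : forall i, 0 < beta i < 1)
  (* the probability space carrying the multisample *)
  (dO : measure_display) (O : measurableType dO) (P : probability O R)
  (xi : forall i : 'I_N, 'I_(K i) -> O -> p.-tuple R)
  (hxi_meas : forall i k, measurable_fun setT (xi i k))
  (hxi_law : forall i k (B : set (p.-tuple R)), measurable B ->
     P (xi i k @^-1` B) = Ptrue i B)
  (hxi_indep : mutually_independent P xi)
  (* Fournier--Guillin concentration constants *)
  (hb : forall i, 0 < b i) (hc : forall i, 0 < c i)
  (hFG_meas : forall i (eps : R), 0 < eps ->
     measurable [set w | (dW (empirical (fun k => xi i k w)) (Ptrue i) <= eps%:E)%E])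
  (hFG : forall i (eps : R), 0 < eps ->
     ((1 - c i * expR (- (b i * (K i)%:R *
          (if eps <= 1 then powR eps (maxn p 2)%:R else powR eps (a i)))))%:E
      <= P [set w | (dW (empirical (fun k => xi i k w)) (Ptrue i) <= eps%:E)%E])%E)
  (* a DRNE computed from the drawn multisample *)
  (xstar : O -> 'I_N -> 'rV[R]_n)
  (hDRNE : forall w, is_DRNE X Xi (fun i => eps_radius p (a i) (b i) (c i) (K i) (beta i))
                       (fun i => empirical (fun k => xi i k w)) h (xstar w)) :
  exists2 A : set O, measurable A /\
    A `<=` [set w | forall i : 'I_N,
        (\int[Ptrue i]_z (h i (xstar w) z)%:E
         <= worst_exp (Xi i) (eps_radius p (a i) (b i) (c i) (K i) (beta i))
              (empirical (fun k => xi i k w)) (h i) (xstar w))%E]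
    & ((1 - \sum_(i < N) beta i)%:E <= P A)%E.
Proof.
set eps := fun i => eps_radius p (a i) (b i) (c i) (K i) (beta i).
pose G i := [set w | (dW (empirical (fun k => xi i k w)) (Ptrue i) <= (eps i)%:E)%E].
have hG : forall i, measurable (G i) /\ ((1 - beta i)%:E <= P (G i))%E.
  move=> i.
  have /andP[be0 be1] := hbeta i.
  have [hpos hnonpos] := @radius_bound _ p _ _ _ _ _ (ha i) (hb i) (hc i) be0 (hK i).
  have [e0|e0] := ltP 0 (eps i).
    split; first exact: hFG_meas.
    apply: le_trans (hFG i _ e0); rewrite lee_fin.
    have := hpos e0; rewrite -/(eps i); lra.
  have cb := hnonpos e0.
  have ege0 : 0 <= eps i.
    by rewrite /eps /eps_radius; case: ifP => _; apply: powR_ge0.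
  have eE : eps i = 0 by apply/le_anti; rewrite e0 ege0.
  pose S (m : nat) := [set w | (dW (empirical (fun k => xi i k w)) (Ptrue i)
                          <= (m.+1%:R^-1 : R)%:E)%E].
  have Sgt0 m : (0 : R) < m.+1%:R^-1 by rewrite invr_gt0 ltr0n.
  have mS m : measurable (S m) by apply: hFG_meas.
  have GE : G i = \bigcap_m S m.
    rewrite eqEsubset; split => w /=.
      move=> Gw m _; apply: le_trans Gw _; rewrite eE lee_fin; exact: ltW.
    move=> Sw; rewrite /G /= eE; apply/lee_addgt0Pr => e he.
    have [k hk] := ltr_add_invr he; rewrite add0r in hk.
    by apply: le_trans (Sw k I) _; rewrite add0e lee_fin ltW.
  rewrite GE; split; first exact: bigcapT_measurable.
  apply: cap_bound => //.
    move=> m m2 mn; apply/subsetPset; move=> w /= hw; apply: (le_trans hw); rewrite lee_fin lef_pV2 ?posrE ?ltr0n //.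
    by rewrite ler_nat.
  move=> m; apply: le_trans (hFG i _ (Sgt0 m)); rewrite lee_fin.
  have : c i * expR (- (b i * (K i)%:R *
      (if (m.+1%:R^-1 : R) <= 1 then powR m.+1%:R^-1 (maxn p 2)%:R
       else powR m.+1%:R^-1 (a i)))) <= c i.
    apply: exp_le; rewrite ?mulr_ge0 ?(ltW (hb i)) ?hc //.
    by case: ifP => _; apply: powR_ge0.
  lra.
exists (\big[setI/setT]_(i < N) G i).
  split; first by apply: bigsetI_measurable => i _; case: (hG i).
  move=> w Aw i; have Gw := @mem_bigsetI _ _ _ _ _ Aw i (mem_index_enum i).
  apply: ereal_sup_ubound; exists (Ptrue i) => //; split => //.
apply: inter_bound => i; [exact: (hG i).1 | exact: (hG i).2].
Qed.
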